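(* Let $(\mathcal V,\mathcal W,\lambda)$ be a FTvN system with center $C$. Then (a) every subset of $C$ is a spectral set, and (b) the orthogonal complement $C^\perp$ of $C$ in $\mathcal V$ is a spectral set.
   Context: A Fan-Theobald-von Neumann (FTvN) system is a triple $(\mathcal V,\mathcal W,\lambda)$ where $\mathcal V,\mathcal W$ are real inner product spaces and $\lambda:\mathcal V\to\mathcal W$ is a map such that: (A1) $\|\lambda(x)\|=\|x\|$ for all $x$; (A2) $\langle x,y\rangle\le\langle\lambda(x),\lambda(y)\rangle$ for all $x,y$; (A3) for every $c\in\mathcal V$ and $q\in\lambda(\mathcal V)$ there exists $x$ with $\lambda(x)=q$ and $\langle c,x\rangle=\langle\lambda(c),\lambda(x)\rangle$. The $\lambda$-orbit of $u$ is $[u]=\{x:\lambda(x)=\lambda(u)\}$; a set $E$ is spectral if $x\in E\Rightarrow[x]\subseteq E$. Elements $x,y$ commute if $\langle x,y\rangle=\langle\lambda(x),\lambda(y)\rangle$; the center $C$ is the set of elements commuting with every element of $\mathcal V$. *)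

(* Defs.v *)
From mathcomp Require Import all_boot all_order all_algebra.
From mathcomp Require Import reals.
Set Implicit Arguments. Unset Strict Implicit. Unset Printing Implicit Defensive.
Import Order.TTheory GRing.Theory Num.Theory.
Local Open Scope ring_scope.

Section FTvN.
Variable R : realType.

Definition is_inner_product (V : lmodType R) (ip : V -> V -> R) : Prop :=
  [/\ (forall x y, ip x y = ip y x),
      (forall (a : R) (x y z : V), ip (a *: x + y) z = a * ip x z + ip y z)
    & (forall x, x != 0 -> 0 < ip x x)].

Definition ipnorm (V : lmodType R) (ip : V -> V -> R) (x : V) : R :=
  Num.sqrt (ip x x).

Definition FTvN_system (V W : lmodType R) (ipV : V -> V -> R) (ipW : W -> W -> R)
    (lam : V -> W) : Prop :=
  [/\ (forall x, ipnorm ipW (lam x) = ipnorm ipV x),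
      (forall x y, ipV x y <= ipW (lam x) (lam y))
    & (forall (c : V) (q : W), (exists d, lam d = q) ->
         exists x, lam x = q /\ ipV c x = ipW (lam c) (lam x))].

Definition orbit (V W : Type) (lam : V -> W) (u : V) : V -> Prop :=
  fun x => lam x = lam u.

Definition spectral (V W : Type) (lam : V -> W) (E : V -> Prop) : Prop :=
  forall x, E x -> forall y, orbit lam x y -> E y.

Definition commute (V W : lmodType R) (ipV : V -> V -> R) (ipW : W -> W -> R)
    (lam : V -> W) (x y : V) : Prop :=
  ipV x y = ipW (lam x) (lam y).

Definition center (V W : lmodType R) (ipV : V -> V -> R) (ipW : W -> W -> R)
    (lam : V -> W) : V -> Prop :=
  fun c => forall y, commute ipV ipW lam c y.

Definition orth_compl (V : lmodType R) (ipV : V -> V -> R) (S : V -> Prop) : V -> Prop :=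
  fun x => forall c, S c -> ipV x c = 0.

End FTvN.

(* Main.v *)
Require Import Defs.
From mathcomp Require Import all_boot all_order all_algebra.
From mathcomp Require Import reals ring.
Import Order.TTheory GRing.Theory Num.Theory.
Local Open Scope ring_scope.

Section Aux.
Variable R : realType.
Variable V : lmodType R.
Variable ip : V -> V -> R.
Hypothesis hip : is_inner_product ip.

Lemma ip0l z : ip 0 z = 0.
Proof.
case: hip => _ hl _.
have := hl 1 0 0 z; rewrite scaler0 addr0 mul1r => e.
by apply: (addIr (ip 0 z)); rewrite add0r -e.
Qed.

Lemma ipBl x y z : ip (x - y) z = ip x z - ip y z.
Proof.
case: hip => hs hl _.
have := hl (-1) y x z; rewrite scaleN1r mulN1r => e.
by rewrite addrC e addrC.
Qed.

Lemma ipBr x y z : ip z (x - y) = ip z x - ip z y.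
Proof. case: hip => hs _ _; by rewrite hs ipBl (hs x) (hs y). Qed.

Lemma ip_ge0 x : 0 <= ip x x.
Proof.
case: hip => _ _ hp.
have [->|nz] := eqVneq x 0; first by rewrite ip0l.
exact: ltW (hp x nz).
Qed.

Lemma ip_eq0 x : ip x x = 0 -> x = 0.
Proof.
case: hip => _ _ hp.
have [//|nz] := eqVneq x 0.
by move=> e; have := hp x nz; rewrite e ltxx.
Qed.
End Aux.

Theorem proposition6p5 (R : realType) (V W : lmodType R)
    (ipV : V -> V -> R) (ipW : W -> W -> R) (lam : V -> W) :
  is_inner_product ipV -> is_inner_product ipW ->
  FTvN_system ipV ipW lam ->
  (forall E : V -> Prop, (forall x, E x -> center ipV ipW lam x) ->
     spectral lam E) /\
  spectral lam (orth_compl ipV (center ipV ipW lam)).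
Proof.
move=> hV hW [A1 A2 A3].
have nrm x : ipV x x = ipW (lam x) (lam x).
  have := A1 x; rewrite /ipnorm => e.
  by rewrite -(sqr_sqrtr (@ip_ge0 _ _ _ hV x)) -(sqr_sqrtr (@ip_ge0 _ _ _ hW (lam x))) e.
split.
- move=> E HE x Ex y Oy.
  have cxy := HE x Ex y.
  rewrite /orbit in Oy.
  suff -> : y = x by [].
  apply/eqP; rewrite -subr_eq0; apply/eqP; apply: (@ip_eq0 _ _ _ hV).
  have [hs _ _] := hV.
  rewrite !(@ipBl _ _ _ hV) !(@ipBr _ _ _ hV) (hs y x) cxy !nrm Oy.
  by rewrite !subrr.
- move=> x Hx y Oy c Cc.
  rewrite /orbit in Oy.
  have [hs _ _] := hV.
  rewrite (hs y c) (Cc y) Oy -(Cc x) (hs c x).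
  have h := Hx c Cc. exact h.
Qed.
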